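(* For any $i\in\{0,\dots,m-1\}$ such that $B_i\le\kappa B_{i+1}$, at least one of the following holds: (i) $\{\operatorname{pr}(b_1),\dots,\operatorname{pr}(b_i)\}$ is a basis of $\Lambda$; (ii) $\Lambda$ is not generated by elements of norm $\le\kappa B_{i+1}$; (iii) $\varphi(\beta)\le B_i$.
   Context: Let $m\ge2$ and $1\le p\le m$ be integers and $P\in\mathbb{R}^{m\times p}$. Vectors of $\mathbb{Z}^m$, $\mathbb{R}^m$ are row vectors and all norms $\|\cdot\|$ are Euclidean. Let $\Lambda=\{x\in\mathbb{Z}^m : xP=0\}$. For $B\ge0$ let $\varepsilon(B)=\min\{\|uP\| : u\in\mathbb{Z}^m,\ \|u\|\le B,\ uP\neq0\}$ (with $\varepsilon(B)=+\infty$ if this set is empty), and for $s\ge0$ let $\varphi(s)=\sup\{B\ge0 : mB/\varepsilon(B)\le s\}\in[0,+\infty]$, with the convention $mB/(+\infty)=0$. Let $\beta>0$ and let $P_\beta\in\mathbb{Z}^{m\times p}$ be such that every entry of $P_\beta-\beta P$ lies in $[-\tfrac12,\tfrac12]$. Let $R\subset\mathbb{Z}^{p+m}$ be the lattice spanned by the rows of the $m\times(p+m)$ matrix $[\,P_\beta\mid I_m\,]$, and let $b_1,\dots,b_m$ be a basis of $R$ that is LLL-reduced (Lenstra–Lenstra–Lovász, with parameter $3/4$) and satisfies $\|b_1\|\le\dots\le\|b_m\|$. Set $B_0=0$, $B_i=\|b_i\|$ for $1\le i\le m$, $\kappa=m^{-1}2^{-(m+1)/2}$, and let $\operatorname{pr}\colon\mathbb{Z}^{p+m}\to\mathbb{Z}^m$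 be the projection onto the last $m$ coordinates. *)

(* Defs.v *)
From Stdlib Require Import Reals Lra Lia ZArith List ClassicalEpsilon.
Open Scope R_scope.

(* Vectors of Z^d / R^d are represented as functions nat -> Z / nat -> R;
   only the coordinates 0..d-1 are meaningful (all definitions below only
   look at those coordinates). Matrices are nat -> nat -> _ (row, column). *)

Fixpoint sumR (n : nat) (f : nat -> R) : R :=
  match n with O => 0 | S k => sumR k f + f k end.
Fixpoint sumZ (n : nat) (f : nat -> Z) : Z :=
  match n with O => 0%Z | S k => (sumZ k f + f k)%Z end.

Definition normR (d : nat) (x : nat -> R) : R := sqrt (sumR d (fun t => x t ^ 2)).
Definition toR (x : nat -> Z) : nat -> R := fun t => IZR (x t).
Definition normZ (d : nat) (x : nat -> Z) : R := normR d (toR x).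
Definition dotR (d : nat) (x y : nat -> R) : R := sumR d (fun t => x t * y t).

Definition vecmat (m : nat) (P : nat -> nat -> R) (u : nat -> Z) : nat -> R :=
  fun j => sumR m (fun k => IZR (u k) * P k j).

Definition Lambda (m p : nat) (P : nat -> nat -> R) (x : nat -> Z) : Prop :=
  forall j, (j < p)%nat -> vecmat m P x j = 0.

Definition is_Zbasis (n d : nat) (v : nat -> nat -> Z) (L : (nat -> Z) -> Prop) : Prop :=
  (forall k, (k < n)%nat -> L (v k)) /\
  (forall c : nat -> Z,
      (forall t, (t < d)%nat -> sumZ n (fun k => (c k * v k t)%Z) = 0%Z) ->
      forall k, (k < n)%nat -> c k = 0%Z) /\
  (forall x, L x -> exists c : nat -> Z,
      forall t, (t < d)%nat -> x t = sumZ n (fun k => (c k * v k t)%Z)).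

Definition generated_by_norm_le (d : nat) (L : (nat -> Z) -> Prop) (r : R) : Prop :=
  forall x, L x -> exists (n : nat) (v : nat -> nat -> Z) (a : nat -> Z),
    (forall k, (k < n)%nat -> L (v k) /\ normZ d (v k) <= r) /\
    (forall t, (t < d)%nat -> x t = sumZ n (fun k => (a k * v k t)%Z)).

(* epsilon(B) as an element of [0,+oo], None standing for +oo:
   the minimum of ||uP|| over u in Z^m, ||u|| <= B, uP <> 0. *)
Definition eps_set (m p : nat) (P : nat -> nat -> R) (B : R) (e : R) : Prop :=
  exists u : nat -> Z, normZ m u <= B /\
    (exists j, (j < p)%nat /\ vecmat m P u j <> 0) /\
    e = normR p (vecmat m P u).

Definition eps (m p : nat) (P : nat -> nat -> R) (B : R) : option R :=
  epsilon (inhabits None) (fun o : option R =>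
    match o with
    | None => forall e, ~ eps_set m p P B e
    | Some x => eps_set m p P B x /\ forall e, eps_set m p P B e -> x <= e
    end).

(* the set { B >= 0 : m B / eps(B) <= s }, with m B / (+oo) = 0 *)
Definition phi_set (m p : nat) (P : nat -> nat -> R) (s B : R) : Prop :=
  0 <= B /\
  match eps m p P B with
  | None => 0 <= s
  | Some e => INR m * B / e <= s
  end.

(* phi(s) = sup of phi_set in [0,+oo] (None = +oo); taking the sup of
   phi_set together with 0 realises the convention sup of empty = 0 in [0,+oo]. *)
Definition phi (m p : nat) (P : nat -> nat -> R) (s : R) : option R :=
  epsilon (inhabits None) (fun o : option R =>
    match o with
    | None => ~ bound (fun B => B = 0 \/ phi_set m p P s B)
    | Some x => is_lub (fun B => B = 0 \/ phi_set m p P s B) x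
    end).

(* The rows of [ Pb | I_m ], vectors in Z^(p+m) *)
Definition aug_row (p : nat) (Pb : nat -> nat -> Z) (k : nat) : nat -> Z :=
  fun t => if (t <? p)%nat then Pb k t else (if Nat.eqb (t - p) k then 1%Z else 0%Z).

Definition in_R (m p : nat) (Pb : nat -> nat -> Z) (x : nat -> Z) : Prop :=
  exists c : nat -> Z, forall t, (t < p + m)%nat ->
    x t = sumZ m (fun k => (c k * aug_row p Pb k t)%Z).

Definition pr (p : nat) (x : nat -> Z) : nat -> Z := fun t => x (p + t)%nat.

Definition vsub (x y : nat -> R) : nat -> R := fun t => x t - y t.
Definition vscale (a : R) (x : nat -> R) : nat -> R := fun t => a * x t.
Definition vzero : nat -> R := fun _ => 0.

Fixpoint gs_list (d : nat) (v : nat -> nat -> R) (n : nat) : list (nat -> R) :=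
  match n with
  | O => nil
  | S k => let l := gs_list d v k in
           l ++ (fold_left (fun acc w => vsub acc (vscale (dotR d (v k) w / dotR d w w) w))
                           l (v k)) :: nil
  end.

Definition gs (d : nat) (v : nat -> nat -> R) (k : nat) : nat -> R :=
  nth k (gs_list d v (S k)) vzero.

Definition gs_mu (d : nat) (v : nat -> nat -> R) (k j : nat) : R :=
  dotR d (v k) (gs d v j) / dotR d (gs d v j) (gs d v j).

Definition LLL_reduced (n d : nat) (v : nat -> nat -> R) : Prop :=
  (forall k j, (j < k)%nat -> (k < n)%nat -> Rabs (gs_mu d v k j) <= 1/2) /\
  (forall k, (1 <= k)%nat -> (k < n)%nat ->
     3/4 * (normR d (gs d v (k - 1)) ^ 2) <=
     normR d (fun t => gs d v k t + gs_mu d v k (k - 1) * gs d v (k - 1) t) ^ 2).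

Definition kappa (m : nat) : R := / INR m * Rpower 2 (- (INR m + 1) / 2).

(* Main.v *)
Require Import Defs.
From Stdlib Require Import Reals Lra Lia ZArith List ClassicalEpsilon Classical FinFun.
Open Scope R_scope.

Lemma sumR_ext n f g : (forall t, (t < n)%nat -> f t = g t) -> sumR n f = sumR n g.
Proof. induction n; simpl; intros H; auto. rewrite IHn by (intros; apply H; lia). rewrite H by lia. auto. Qed.
Lemma sumR_add n f g : sumR n (fun t => f t + g t) = sumR n f + sumR n g.
Proof. induction n; simpl; [lra|]. rewrite IHn; lra. Qed.
Lemma sumR_scal n c f : sumR n (fun t => c * f t) = c * sumR n f.
Proof. induction n; simpl; [lra|]. rewrite IHn; lra. Qed.
Lemma sumR_opp n f : sumR n (fun t => - f t) = - sumR n f.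
Proof. induction n; simpl; [lra|]. rewrite IHn; lra. Qed.
Lemma sumR_swap n k F : sumR n (fun a => sumR k (fun c => F a c)) = sumR k (fun c => sumR n (fun a => F a c)).
Proof. induction n; simpl.
 - induction k; simpl; lra.
 - rewrite IHn. rewrite <- sumR_add. auto. Qed.
Lemma sumR_delta n j f : (j < n)%nat -> (forall t, (t < n)%nat -> t <> j -> f t = 0) -> sumR n f = f j.
Proof. induction n; intros Hj H; [lia|]. simpl. destruct (Nat.eq_dec j n).
 - subst. rewrite (sumR_ext n f (fun _ => 0)). { clear. induction n; simpl; lra. }
   intros; apply H; lia.
 - rewrite IHn by (try lia; intros; apply H; lia). rewrite (H n) by lia. lra. Qed.
Lemma sumR_nonneg n f : (forall t, (t < n)%nat -> 0 <= f t) -> 0 <= sumR n f.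
Proof. induction n; simpl; intros H; [lra|]. pose proof (IHn ltac:(intros; apply H; lia)). pose proof (H n ltac:(lia)); lra. Qed.
Lemma sumR_le n f g : (forall t, (t < n)%nat -> f t <= g t) -> sumR n f <= sumR n g.
Proof. induction n; simpl; intros H; [lra|]. pose proof (IHn ltac:(intros; apply H; lia)). pose proof (H n ltac:(lia)); lra. Qed.
Lemma sumR_split a c f : sumR (a + c) f = sumR a f + sumR c (fun t => f (a + t)%nat).
Proof. induction c; simpl. rewrite Nat.add_0_r; lra. rewrite Nat.add_succ_r. simpl. rewrite IHc. lra. Qed.
Lemma sumR_zero_nonneg n f : (forall t, (t < n)%nat -> 0 <= f t) -> sumR n f = 0 -> forall t, (t < n)%nat -> f t = 0.
Proof. induction n; simpl; intros H E t Ht; [lia|].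
 pose proof (sumR_nonneg n f ltac:(intros; apply H; lia)). pose proof (H n ltac:(lia)).
 destruct (Nat.eq_dec t n). subst; lra. apply IHn; try lra; try lia. intros; apply H; lia. Qed.
Lemma sumR_const n c : sumR n (fun _ => c) = INR n * c.
Proof. induction n; simpl sumR; [simpl; lra|]. rewrite IHn, S_INR; lra. Qed.

Lemma sumZ_ext n f g : (forall t, (t < n)%nat -> f t = g t) -> sumZ n f = sumZ n g.
Proof. induction n; simpl; intros H; auto. rewrite IHn by (intros; apply H; lia). rewrite H by lia. auto. Qed.
Lemma sumZ_add n f g : sumZ n (fun t => f t + g t)%Z = (sumZ n f + sumZ n g)%Z.
Proof. induction n; simpl; [lia|]. rewrite IHn; lia. Qed.
Lemma sumZ_scal n c f : sumZ n (fun t => c * f t)%Z = (c * sumZ n f)%Z.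
Proof. induction n; simpl; [lia|]. rewrite IHn; lia. Qed.
Lemma sumZ_zero n f : (forall t, (t < n)%nat -> f t = 0%Z) -> sumZ n f = 0%Z.
Proof. induction n; simpl; intros; auto. rewrite IHn, H by (try intros; try apply H; lia). lia. Qed.
Lemma sumZ_delta n j f : (j < n)%nat -> (forall t, (t < n)%nat -> t <> j -> f t = 0%Z) -> sumZ n f = f j.
Proof. induction n; intros Hj H; [lia|]. simpl. destruct (Nat.eq_dec j n).
 - subst. rewrite sumZ_zero. lia. intros; apply H; lia.
 - rewrite IHn by (try lia; intros; apply H; lia). rewrite (H n) by lia. lia. Qed.
Lemma sumZ_tail n i f : (i <= n)%nat -> (forall t, (i <= t < n)%nat -> f t = 0%Z) -> sumZ n f = sumZ i f.
Proof. induction n; intros Hi H. replace i with 0%nat by lia; auto.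
 destruct (Nat.eq_dec i (S n)). subst; auto. simpl. rewrite IHn by (try lia; intros; apply H; lia).
 rewrite H by lia. lia. Qed.
Lemma IZR_sumZ n f : IZR (sumZ n f) = sumR n (fun t => IZR (f t)).
Proof. induction n; simpl; auto. rewrite plus_IZR, IHn; auto. Qed.

Lemma normR_sq d x : normR d x ^ 2 = sumR d (fun t => x t ^ 2).
Proof. unfold normR. rewrite <- Rsqr_pow2. apply Rsqr_sqrt. apply sumR_nonneg; intros; apply pow2_ge_0. Qed.
Lemma normR_nonneg d x : 0 <= normR d x.
Proof. apply sqrt_pos. Qed.
Lemma dotR_self d x : dotR d x x = sumR d (fun t => x t ^ 2).
Proof. apply sumR_ext; intros; ring. Qed.

Lemma CS n x y : (sumR n (fun t => x t * y t)) ^ 2 <= sumR n (fun t => x t ^ 2) * sumR n (fun t => y t ^ 2).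
Proof.
 set (S := sumR n (fun t => x t * y t)). set (X := sumR n (fun t => x t ^ 2)). set (Y := sumR n (fun t => y t ^ 2)).
 assert (HX : 0 <= X) by (apply sumR_nonneg; intros; apply pow2_ge_0).
 assert (HY : 0 <= Y) by (apply sumR_nonneg; intros; apply pow2_ge_0).
 destruct (Req_dec Y 0) as [HY0|HY0].
 - assert (S = 0). { unfold S. rewrite (sumR_ext n _ (fun _ => 0)). clear; induction n; simpl; lra.
     intros t Ht. pose proof (sumR_zero_nonneg n (fun t => y t ^ 2) ltac:(intros; apply pow2_ge_0) HY0 t Ht).
     simpl in H. assert (y t = 0) by nra. rewrite H0; ring. }
   rewrite H, HY0. lra.
 - assert (0 <= sumR n (fun t => (Y * x t - S * y t) ^ 2)) by (apply sumR_nonneg; intros; apply pow2_ge_0).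
   rewrite (sumR_ext n _ (fun t => (Y*Y) * (x t ^ 2) + ((-2 * Y * S) * (x t * y t) + (S*S) * (y t ^ 2)))) in H by (intros; ring).
   rewrite sumR_add, sumR_add, !sumR_scal in H. fold X S Y in H.
   assert (0 <= Y * (Y * X - S * S)) by nra.
   assert (0 < Y) by lra.
   assert (0 <= Y * X - S*S). { destruct (Rle_dec 0 (Y*X - S*S)); auto. nra. }
   nra.
Qed.

Lemma dot_sym d x y : dotR d x y = dotR d y x.
Proof. apply sumR_ext; intros; ring. Qed.

Lemma sq_le_norm d x t : (t < d)%nat -> x t ^ 2 <= sumR d (fun t => x t ^ 2).
Proof. intros. induction d. lia. simpl. destruct (Nat.eq_dec t d). subst.
 pose proof (sumR_nonneg d (fun t => x t ^ 2) ltac:(intros; apply pow2_ge_0)). simpl in *; lra.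
 pose proof (IHd ltac:(lia)). pose proof (pow2_ge_0 (x d)). simpl in *; lra. Qed.

Lemma dot_zero_vec d x y : dotR d x x = 0 -> dotR d y x = 0.
Proof. intros H. rewrite dotR_self in H. unfold dotR.
 rewrite (sumR_ext d _ (fun _ => 0)). clear; induction d; simpl; lra.
 intros t Ht. pose proof (sumR_zero_nonneg d _ ltac:(intros; apply pow2_ge_0) H t Ht). simpl in H0.
 assert (x t = 0) by nra. rewrite H1; ring. Qed.

Lemma sq_le_nonneg a c : 0 <= a -> 0 <= c -> a ^ 2 <= c ^ 2 -> a <= c.
Proof. intros. destruct (Rle_dec a c); auto. assert (c < a) by lra. assert (c * c < a * a) by (apply Rmult_le_0_lt_compat; lra). simpl in H1. lra. Qed.

Lemma gs_len d v n : length (gs_list d v n) = n.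
Proof. induction n; simpl; auto. rewrite length_app, IHn; simpl; lia. Qed.

Lemma gs_nth d v n j : (j < n)%nat -> nth j (gs_list d v n) vzero = gs d v j.
Proof. induction n; intros H; [lia|]. destruct (Nat.eq_dec j n). subst; reflexivity.
 simpl gs_list. rewrite app_nth1 by (rewrite gs_len; lia). apply IHn; lia. Qed.

Lemma gs_last d v n : gs_list d v (S n) = gs_list d v n ++ gs d v n :: nil.
Proof. unfold gs. simpl gs_list at 2 3. rewrite app_nth2 by (rewrite gs_len; lia). rewrite gs_len, Nat.sub_diag. reflexivity. Qed.

Lemma gs_fold d v k k' t :
  fold_left (fun acc w => vsub acc (vscale (dotR d (v k) w / dotR d w w) w)) (gs_list d v k') (v k) t
  = v k t - sumR k' (fun j => gs_mu d v k j * gs d v j t).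
Proof. induction k'. simpl; ring.
 rewrite gs_last, fold_left_app. simpl fold_left. match goal with |- vsub ?a (vscale ?c ?w) t = ?r => change (a t - c * w t = r) end. rewrite IHk'. simpl sumR. unfold gs_mu. ring. Qed.

Lemma GS1 d v k t : gs d v k t = v k t - sumR k (fun j => gs_mu d v k j * gs d v j t).
Proof. rewrite <- (gs_fold d v k k t). unfold gs at 1. simpl gs_list. rewrite app_nth2 by (rewrite gs_len; lia). rewrite gs_len, Nat.sub_diag. reflexivity. Qed.

Lemma dot_lin d k x c y : dotR d x (fun t => sumR k (fun j => c j * y j t)) = sumR k (fun j => c j * dotR d x (y j)).
Proof. unfold dotR. rewrite (sumR_ext d _ (fun t => sumR k (fun j => c j * (x t * y j t)))).
 rewrite sumR_swap. apply sumR_ext; intros. rewrite <- sumR_scal. reflexivity.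
 intros. rewrite <- sumR_scal. apply sumR_ext; intros; ring. Qed.
Lemma dot_add d x a c : dotR d x (fun t => a t + c t) = dotR d x a + dotR d x c.
Proof. unfold dotR. rewrite <- sumR_add. apply sumR_ext; intros; ring. Qed.
Lemma dot_sub d x a c : dotR d x (fun t => a t - c t) = dotR d x a - dotR d x c.
Proof. unfold dotR. rewrite (sumR_ext d _ (fun t => x t * a t + - (x t * c t))) by (intros; ring).
 rewrite sumR_add, sumR_opp. ring. Qed.
Lemma dot_ext d x a c : (forall t, (t < d)%nat -> a t = c t) -> dotR d x a = dotR d x c.
Proof. intros; apply sumR_ext; intros; rewrite H; auto. Qed.

Lemma MUG d v k j : gs_mu d v k j * dotR d (gs d v j) (gs d v j) = dotR d (v k) (gs d v j).
Proof. unfold gs_mu. destruct (Req_dec (dotR d (gs d v j) (gs d v j)) 0).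
 rewrite H, dot_zero_vec by auto. ring. field; auto. Qed.

Lemma GS2 d v : forall k j, (j < k)%nat -> dotR d (gs d v k) (gs d v j) = 0.
Proof. intro k. induction k as [k IH] using (well_founded_induction lt_wf). intros j Hj.
 rewrite dot_sym. rewrite (dot_ext d _ _ (fun t => v k t - sumR k (fun l => gs_mu d v k l * gs d v l t))) by (intros; apply GS1).
 rewrite dot_sub, dot_lin. rewrite (sumR_delta k j); [| exact Hj |].
 2:{ intros l Hl Hne. destruct (Nat.lt_ge_cases l j).
   - rewrite (IH j Hj l H). ring.
   - rewrite dot_sym, (IH l Hl j) by lia. ring. }
 rewrite MUG, dot_sym. ring. Qed.

Lemma V_expand d v l t : v l t = gs d v l t + sumR l (fun j => gs_mu d v l j * gs d v j t).
Proof. rewrite GS1. ring. Qed.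

Lemma GS3a d v l L : (l < L)%nat -> dotR d (v l) (gs d v L) = 0.
Proof. intros. rewrite dot_sym. rewrite (dot_ext d _ _ (fun t => gs d v l t + sumR l (fun j => gs_mu d v l j * gs d v j t))) by (intros; apply V_expand).
 rewrite dot_add, dot_lin. rewrite (GS2 d v L l H). rewrite (sumR_ext l _ (fun _ => 0)).
 { clear; induction l; simpl; lra. } intros. rewrite (GS2 d v L t) by lia. ring. Qed.
Lemma GS3b d v L : dotR d (v L) (gs d v L) = dotR d (gs d v L) (gs d v L).
Proof. rewrite dot_sym. rewrite (dot_ext d _ _ (fun t => gs d v L t + sumR L (fun j => gs_mu d v L j * gs d v j t))) by (intros; apply V_expand).
 rewrite dot_add, dot_lin. rewrite (sumR_ext L _ (fun _ => 0)).
 { clear; induction L; simpl; lra. } intros. rewrite (GS2 d v L t) by lia. ring. Qed.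
Lemma GS4 d v l : dotR d (v l) (v l) = dotR d (gs d v l) (gs d v l) + sumR l (fun j => gs_mu d v l j ^ 2 * dotR d (gs d v j) (gs d v j)).
Proof. rewrite (dot_ext d _ _ (fun t => gs d v l t + sumR l (fun j => gs_mu d v l j * gs d v j t))) at 1 by (intros; apply V_expand).
 rewrite dot_add, dot_lin, GS3b. f_equal. apply sumR_ext; intros. rewrite <- MUG. ring. Qed.

Lemma Lov_expand d v k mu : (1 <= k)%nat ->
  normR d (fun t => gs d v k t + mu * gs d v (k - 1) t) ^ 2 =
  dotR d (gs d v k) (gs d v k) + mu ^ 2 * dotR d (gs d v (k-1)) (gs d v (k-1)).
Proof. intros. rewrite normR_sq. pose proof (GS2 d v k (k-1) ltac:(lia)). unfold dotR in *.
 rewrite (sumR_ext d _ (fun t => gs d v k t * gs d v k t + ((2*mu) * (gs d v k t * gs d v (k-1) t) + mu^2 * (gs d v (k-1) t * gs d v (k-1) t)))) by (intros; ring).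
 rewrite !sumR_add, !sumR_scal, H0. ring. Qed.

Lemma g_nonneg d x : 0 <= dotR d x x.
Proof. rewrite dotR_self. apply sumR_nonneg; intros; apply pow2_ge_0. Qed.

Lemma abs_half_sq x : Rabs x <= 1/2 -> x ^ 2 <= 1/4.
Proof. intros. rewrite <- pow2_abs. pose proof (Rabs_pos x). simpl. nra. Qed.

Lemma Lov_ratio n d v k : LLL_reduced n d v -> (1 <= k)%nat -> (k < n)%nat ->
  dotR d (gs d v (k-1)) (gs d v (k-1)) <= 2 * dotR d (gs d v k) (gs d v k).
Proof. intros [H1 H2] Hk Hkn. specialize (H2 k Hk Hkn). rewrite Lov_expand in H2 by auto.
 rewrite normR_sq, <- dotR_self in H2. specialize (H1 k (k-1)%nat ltac:(lia) Hkn).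
 set (mu := gs_mu d v k (k-1)) in *. assert (mu^2 <= 1/4) by (apply abs_half_sq; auto).
 pose proof (g_nonneg d (gs d v (k-1))). pose proof (g_nonneg d (gs d v k)). nra. Qed.

Lemma h_mono n d v L j : LLL_reduced n d v -> (L < n)%nat -> (j <= L)%nat ->
  dotR d (gs d v j) (gs d v j) * 2 ^ j <= dotR d (gs d v L) (gs d v L) * 2 ^ L.
Proof. intros HL. induction L; intros HLn Hj.
 - replace j with 0%nat by lia. lra.
 - destruct (Nat.eq_dec j (S L)). subst; lra.
   eapply Rle_trans. apply IHL; lia. pose proof (Lov_ratio n d v (S L) HL ltac:(lia) HLn).
   replace (S L - 1)%nat with L in H by lia. simpl. pose proof (pow_lt 2 L ltac:(lra)). nra. Qed.

Lemma geo l : sumR l (fun j => (/2)^j) = 2 - 2 * (/2)^l.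
Proof. induction l; simpl sumR. simpl; lra. rewrite IHl. simpl. lra. Qed.

Lemma V_bound n d v l L : LLL_reduced n d v -> (l <= L)%nat -> (L < n)%nat ->
  dotR d (v l) (v l) <= 3/2 * 2 ^ L * dotR d (gs d v L) (gs d v L).
Proof. intros HL Hl HLn. rewrite GS4. set (h := dotR d (gs d v L) (gs d v L) * 2 ^ L).
 assert (Hg : forall j, (j <= L)%nat -> dotR d (gs d v j) (gs d v j) <= h * (/2)^j).
 { intros j Hj. pose proof (h_mono n d v L j HL HLn Hj). fold h in H.
   replace (dotR d (gs d v j) (gs d v j)) with (dotR d (gs d v j) (gs d v j) * 2^j * (/2)^j).
   2:{ rewrite Rmult_assoc, <- Rpow_mult_distr. replace (2 * /2) with 1 by lra. rewrite pow1. ring. }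
   apply Rmult_le_compat_r; auto. apply pow_le; lra. }
 assert (sumR l (fun j => gs_mu d v l j ^ 2 * dotR d (gs d v j) (gs d v j)) <= sumR l (fun j => 1/4 * (h * (/2)^j))).
 { apply sumR_le. intros j Hj. destruct HL as [H1 _]. specialize (H1 l j Hj ltac:(lia)).
   assert (gs_mu d v l j ^2 <= 1/4) by (apply abs_half_sq; auto).
   pose proof (g_nonneg d (gs d v j)). pose proof (Hg j ltac:(lia)). apply Rmult_le_compat; try lra. apply pow2_ge_0. }
 rewrite sumR_scal, sumR_scal, geo in H. pose proof (Hg l Hl).
 assert (0 <= h) by (unfold h; apply Rmult_le_pos; [apply g_nonneg | apply pow_le; lra]).
 assert (0 <= (/2)^l <= 1). { split. apply pow_le; lra. clear; induction l; simpl; [lra|]. pose proof (pow_le (/2) l ltac:(lra)); lra. }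
 unfold h in *. nra. Qed.

Lemma max_exists (Pr : nat -> Prop) n : forall l0, Pr l0 -> (l0 < n)%nat ->
  exists L, (L < n)%nat /\ (l0 <= L)%nat /\ Pr L /\ forall l, (L < l < n)%nat -> ~ Pr l.
Proof. induction n; intros l0 H Hl. lia.
 destruct (classic (Pr n)). exists n. repeat split; auto; lia.
 destruct (IHn l0 H ltac:(destruct (Nat.eq_dec l0 n); [subst; contradiction|lia])) as (L & ? & ? & ? & ?).
 exists L. repeat split; auto; try lia. intros l Hl'. destruct (Nat.eq_dec l n). subst; auto. apply H4; lia. Qed.

Lemma LA m d (b : nat -> nat -> Z) (sigma : nat -> nat) (dc : nat -> Z) (w : nat -> R) k0 :
  (forall k, (k < m)%nat -> (sigma k < m)%nat) ->
  (forall j k, (j < m)%nat -> (k < m)%nat -> sigma j = sigma k -> j = k) ->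
  LLL_reduced m d (fun k => toR (b (sigma k))) ->
  (k0 < m)%nat -> dc k0 <> 0%Z ->
  (forall t, (t < d)%nat -> w t = sumR m (fun k => IZR (dc k) * toR (b k) t)) ->
  dotR d (toR (b k0)) (toR (b k0)) <= 3/2 * 2 ^ (m - 1) * dotR d w w.
Proof.
 intros Hf Hi HL Hk0 Hd0 Hw.
 assert (Hs : bSurjective m sigma) by (apply bInjective_bSurjective; auto).
 set (V := fun k => toR (b (sigma k))) in *.
 destruct (Hs k0 Hk0) as (l0 & Hl0 & E0).
 destruct (max_exists (fun l => dc (sigma l) <> 0%Z) m l0 ltac:(simpl; rewrite E0; auto) Hl0) as (L & HLm & HlL & HdL & Hmax).
 set (G := gs d V L). set (g := dotR d G G).
 assert (Hdot : dotR d w G = IZR (dc (sigma L)) * g).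
 { rewrite dot_sym. rewrite (dot_ext d G w (fun t => sumR m (fun k => IZR (dc k) * toR (b k) t))) by auto.
   rewrite dot_lin. rewrite (sumR_delta m (sigma L)); auto.
   - f_equal. unfold g. rewrite dot_sym. apply (GS3b d V L).
   - intros k Hk Hne. destruct (Hs k Hk) as (l & Hl & El). subst k.
     destruct (Nat.lt_total l L) as [Hlt|[Heq|Hgt]].
     + unfold G. rewrite dot_sym. change (toR (b (sigma l))) with (V l). rewrite GS3a by auto. ring.
     + subst; contradiction.
     + assert (dc (sigma l) = 0%Z) by (apply NNPP; apply Hmax; lia). rewrite H. simpl. ring. }
 assert (HCS : (dotR d w G) ^ 2 <= dotR d w w * g).
 { unfold g. rewrite !dotR_self. apply CS. }
 rewrite Hdot in HCS.
 assert (Hz : 1 <= IZR (dc (sigma L)) ^ 2).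
 { simpl. rewrite Rmult_1_r, <- mult_IZR. apply IZR_le. nia. }
 assert (Hg0 : 0 <= g) by apply g_nonneg.
 assert (Hgw : g <= dotR d w w).
 { destruct (Req_dec g 0). rewrite H; apply g_nonneg.
   assert (g * g <= dotR d w w * g) by nra. nra. }
 pose proof (V_bound m d V l0 L HL HlL HLm). change (V l0) with (toR (b (sigma l0))) in H. rewrite E0 in H.
 eapply Rle_trans; [exact H|]. fold G g.
 assert (2 ^ L <= 2 ^ (m-1)) by (apply Rle_pow; lra || lia).
 pose proof (pow_le 2 L ltac:(lra)). nra.
Qed.

Lemma aug_low p Pb k t : (t < p)%nat -> aug_row p Pb k t = Pb k t.
Proof. intros. unfold aug_row. replace (t <? p)%nat with true by (symmetry; apply Nat.ltb_lt; auto). auto. Qed.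
Lemma aug_high p Pb k s : aug_row p Pb k (p + s) = if Nat.eqb s k then 1%Z else 0%Z.
Proof. unfold aug_row. replace (p + s <? p)%nat with false by (symmetry; apply Nat.ltb_ge; lia).
 replace (p + s - p)%nat with s by lia. auto. Qed.

Lemma R_first m p Pb x : in_R m p Pb x -> forall t, (t < p)%nat -> x t = sumZ m (fun k => pr p x k * Pb k t)%Z.
Proof. intros [c Hc] t Ht.
 assert (Hcs : forall s, (s < m)%nat -> c s = pr p x s).
 { intros s Hs. unfold pr. rewrite Hc by lia. rewrite (sumZ_delta m s); [| auto |].
   rewrite aug_high, Nat.eqb_refl. lia. intros k Hk Hne. rewrite aug_high.
   replace (Nat.eqb s k) with false by (symmetry; apply Nat.eqb_neq; auto). lia. }
 rewrite Hc by lia. apply sumZ_ext. intros. rewrite aug_low, Hcs by auto. auto. Qed.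

Definition lift m p (Pb : nat -> nat -> Z) (v : nat -> Z) : nat -> Z :=
  fun t => if (t <? p)%nat then sumZ m (fun k => v k * Pb k t)%Z else v (t - p)%nat.

Lemma lift_in_R m p Pb v : in_R m p Pb (lift m p Pb v).
Proof. exists v. intros t Ht. unfold lift. destruct (t <? p)%nat eqn:E.
 - apply Nat.ltb_lt in E. apply sumZ_ext; intros. rewrite aug_low; auto.
 - apply Nat.ltb_ge in E. replace t with (p + (t - p))%nat by lia. rewrite Nat.add_comm, Nat.add_sub. rewrite Nat.add_comm.
   rewrite (sumZ_delta m (t - p)); [| lia |]. rewrite aug_high, Nat.eqb_refl. lia.
   intros k Hk Hne. rewrite aug_high. replace (Nat.eqb (t - p) k) with false by (symmetry; apply Nat.eqb_neq; auto). lia. Qed.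

Lemma lift_pr m p Pb v s : pr p (lift m p Pb v) s = v s.
Proof. unfold pr, lift. replace (p + s <? p)%nat with false by (symmetry; apply Nat.ltb_ge; lia). f_equal; lia. Qed.
Lemma lift_low m p Pb v t : (t < p)%nat -> lift m p Pb v t = sumZ m (fun k => v k * Pb k t)%Z.
Proof. intros. unfold lift. replace (t <? p)%nat with true by (symmetry; apply Nat.ltb_lt; auto). auto. Qed.

Lemma real_decomp m P Pb beta (u : nat -> Z) t :
  IZR (sumZ m (fun k => u k * Pb k t)%Z) = beta * vecmat m P u t + sumR m (fun k => IZR (u k) * (IZR (Pb k t) - beta * P k t)).
Proof. rewrite IZR_sumZ. unfold vecmat. rewrite <- sumR_scal, <- sumR_add. apply sumR_ext; intros. rewrite mult_IZR. ring. Qed.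

Lemma E_bound m p P Pb beta (u : nat -> Z) : (p <= m)%nat ->
  (forall k j, (k < m)%nat -> (j < p)%nat -> -(1/2) <= IZR (Pb k j) - beta * P k j <= 1/2) ->
  sumR p (fun t => (sumR m (fun k => IZR (u k) * (IZR (Pb k t) - beta * P k t))) ^ 2)
  <= INR m ^ 2 / 4 * sumR m (fun k => IZR (u k) ^ 2).
Proof. intros Hpm HE.
 assert (Hs : forall t, (t < p)%nat -> (sumR m (fun k => IZR (u k) * (IZR (Pb k t) - beta * P k t))) ^ 2 <= INR m / 4 * sumR m (fun k => IZR (u k) ^ 2)).
 { intros t Ht. eapply Rle_trans. apply CS. cbv beta.
   assert (sumR m (fun k => (IZR (Pb k t) - beta * P k t) ^ 2) <= sumR m (fun _ => 1/4)).
   { apply sumR_le. intros k Hk. specialize (HE k t Hk Ht). simpl. nra. }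
   rewrite sumR_const in H. pose proof (sumR_nonneg m (fun k => IZR (u k) ^ 2) ltac:(intros; apply pow2_ge_0)). nra. }
 eapply Rle_trans. apply sumR_le. exact Hs. rewrite sumR_const.
 pose proof (sumR_nonneg m (fun k => IZR (u k) ^ 2) ltac:(intros; apply pow2_ge_0)).
 assert (INR p <= INR m) by (apply le_INR; auto). pose proof (pos_INR p). pose proof (pos_INR m).
 set (X := sumR m (fun k => IZR (u k) ^ 2)) in *.
 assert (INR p * X <= INR m * X) by nra.
 assert (INR m * (INR p * X) <= INR m * (INR m * X)) by (apply Rmult_le_compat_l; auto). nra. Qed.

Lemma normZ_split p m x : normZ (p + m) x ^ 2 = sumR p (fun t => IZR (x t) ^ 2) + sumR m (fun t => IZR (pr p x t) ^ 2).
Proof. unfold normZ. rewrite normR_sq, sumR_split. reflexivity. Qed.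

Definition zr (N : nat) : list Z := map (fun k => (Z.of_nat k - Z.of_nat N)%Z) (seq 0 (2 * N + 1)).
Fixpoint allv (N n : nat) : list (list Z) :=
  match n with O => nil :: nil | S n' => flat_map (fun z => map (cons z) (allv N n')) (zr N) end.

Lemma zr_in N z : (Z.abs z <= Z.of_nat N)%Z -> In z (zr N).
Proof. intros. unfold zr. apply in_map_iff. exists (Z.to_nat (z + Z.of_nat N)). split. lia.
 apply in_seq. lia. Qed.

Lemma allv_in N n : forall u : nat -> Z, (forall t, (t < n)%nat -> (Z.abs (u t) <= Z.of_nat N)%Z) ->
  In (map u (seq 0 n)) (allv N n).
Proof. induction n; intros u H. simpl; auto.
 simpl. rewrite <- seq_shift, map_map. apply in_flat_map. exists (u 0%nat). split. apply zr_in, H; lia.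
 apply in_map. apply (IHn (fun t => u (S t))). intros; apply H; lia. Qed.

Definition vecl (l : list Z) : nat -> Z := fun t => nth t l 0%Z.
Lemma vecl_map (u : nat -> Z) n t : (t < n)%nat -> vecl (map u (seq 0 n)) t = u t.
Proof. intros. unfold vecl. rewrite (nth_indep _ _ (u 0%nat)) by (rewrite length_map, length_seq; auto).
 rewrite map_nth, seq_nth by auto. reflexivity. Qed.

Lemma list_min {A} (L : list A) (Q : A -> Prop) (f : A -> R) : (exists x, In x L /\ Q x) ->
  exists x0, In x0 L /\ Q x0 /\ forall x, In x L -> Q x -> f x0 <= f x.
Proof. induction L as [|a L IH]; intros [x [Hx Qx]]. destruct Hx.
 destruct (classic (exists y, In y L /\ Q y)) as [Hy|Hy].
 - destruct (IH Hy) as (x0 & H1 & H2 & H3). destruct (classic (Q a /\ f a < f x0)) as [Ha|Ha].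
   + exists a. split; [left; auto|]. split; [tauto|]. intros y [Ea|Hy'] Qy; [subst y|]. lra. pose proof (H3 y Hy' Qy). lra.
   + exists x0. split; [right; auto|]. split; auto. intros y [Ea|Hy'] Qy; [subst y|]; auto.
     destruct (Rle_dec (f x0) (f a)); auto. exfalso; apply Ha; split; auto; lra.
 - destruct Hx as [Ex|Hx]. 2:{ exfalso; apply Hy; eauto. } subst x.
   exists a. split; [left; auto|]. split; auto. intros y [Ea|Hy'] Qy; [subst y|]. lra. exfalso; apply Hy; eauto. Qed.

Lemma normZ_ext d u u' : (forall t, (t < d)%nat -> u t = u' t) -> normZ d u = normZ d u'.
Proof. intros. unfold normZ, normR. f_equal. apply sumR_ext; intros; unfold toR; rewrite H; auto. Qed.
Lemma vecmat_ext m P u u' : (forall t, (t < m)%nat -> u t = u' t) -> forall j, vecmat m P u j = vecmat m P u' j.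
Proof. intros. unfold vecmat. apply sumR_ext; intros; rewrite H; auto. Qed.

Lemma coord_le_norm d u t : (t < d)%nat -> Rabs (IZR (u t)) <= normZ d u.
Proof. intros. unfold normZ, normR. rewrite <- sqrt_Rsqr_abs. apply sqrt_le_1_alt.
 rewrite Rsqr_pow2. apply (sq_le_norm d (toR u) t H). Qed.

Lemma eps_spec_holds m p P B :
  match eps m p P B with
  | None => forall e, ~ eps_set m p P B e
  | Some x => eps_set m p P B x /\ forall e, eps_set m p P B e -> x <= e
  end.
Proof. unfold eps. apply epsilon_spec.
 destruct (classic (exists e, eps_set m p P B e)) as [He|He].
 2:{ exists None. intros e H; apply He; eauto. }
 destruct He as (e & u & Hu1 & Hu2 & Hu3).
 set (N := Z.to_nat (up B)).
 assert (HN : forall u', normZ m u' <= B -> forall t, (t < m)%nat -> (Z.abs (u' t) <= Z.of_nat N)%Z).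
 { intros u' Hu' t Ht. pose proof (coord_le_norm m u' t Ht). rewrite Rabs_Zabs in H.
   pose proof (archimed B) as [H1 _]. assert (IZR (Z.abs (u' t)) < IZR (up B)) by lra.
   apply lt_IZR in H0. unfold N. lia. }
 set (Q := fun l => normZ m (vecl l) <= B /\ (exists j, (j < p)%nat /\ vecmat m P (vecl l) j <> 0)).
 destruct (list_min (allv N m) Q (fun l => normR p (vecmat m P (vecl l)))) as (l0 & Hl0 & HQ & Hmin).
 { exists (map u (seq 0 m)). split. apply allv_in; auto. split.
   rewrite (normZ_ext m _ u) by (intros; apply vecl_map; auto). auto.
   destruct Hu2 as (j & Hj & Hne). exists j. split; auto. rewrite (vecmat_ext m P _ u) by (intros; apply vecl_map; auto). auto. }
 exists (Some (normR p (vecmat m P (vecl l0)))). split.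
 - exists (vecl l0). destruct HQ. auto.
 - intros e' (u' & H1 & H2 & H3). subst e'.
   assert (Hin := allv_in N m u' (HN u' H1)).
   assert (Hext : forall t, (t < m)%nat -> vecl (map u' (seq 0 m)) t = u' t) by (intros; apply vecl_map; auto).
   specialize (Hmin _ Hin). simpl in Hmin.
   assert (normR p (vecmat m P (vecl (map u' (seq 0 m)))) = normR p (vecmat m P u')).
   { unfold normR. f_equal. apply sumR_ext. intros. rewrite (vecmat_ext m P _ u' Hext). auto. }
   rewrite <- H. apply Hmin. split. rewrite (normZ_ext m _ u') by auto. auto.
   destruct H2 as (j & Hj & Hne). exists j. split; auto. rewrite (vecmat_ext m P _ u') by auto. auto.
Qed.

Lemma phi_spec_holds m p P s :
  match phi m p P s with
  | None => ~ bound (fun B => B = 0 \/ phi_set m p P s B)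
  | Some x => is_lub (fun B => B = 0 \/ phi_set m p P s B) x
  end.
Proof. unfold phi. apply epsilon_spec.
 destruct (classic (bound (fun B => B = 0 \/ phi_set m p P s B))) as [Hb|Hb].
 - destruct (completeness _ Hb) as [x Hx]. exists 0; left; auto. exists (Some x); auto.
 - exists None; auto. Qed.

Lemma sorted_chain d m (b : nat -> nat -> Z) :
  (forall k, (S k < m)%nat -> normZ d (b k) <= normZ d (b (S k))) ->
  forall j k, (j <= k)%nat -> (k < m)%nat -> normZ d (b j) <= normZ d (b k).
Proof. intros H j k. induction k; intros Hj Hk. replace j with 0%nat by lia; lra.
 destruct (Nat.eq_dec j (S k)). subst; lra. eapply Rle_trans. apply IHk; lia. apply H; lia. Qed.

Lemma normZ_sq d x : normZ d x ^ 2 = sumR d (fun t => IZR (x t) ^ 2).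
Proof. unfold normZ. apply normR_sq. Qed.
Lemma normZ_nonneg d x : 0 <= normZ d x.
Proof. apply normR_nonneg. Qed.

Lemma basis_pos m d b L : is_Zbasis m d b L -> forall k, (k < m)%nat -> 0 < normZ d (b k).
Proof. intros [_ [Hind _]] k Hk. destruct (Rle_lt_dec (normZ d (b k)) 0) as [H|H]; auto. exfalso.
 pose proof (normZ_nonneg d (b k)). assert (normZ d (b k) ^ 2 = 0) by (replace (normZ d (b k)) with 0 by lra; ring).
 rewrite normZ_sq in H1. pose proof (sumR_zero_nonneg d _ ltac:(intros; apply pow2_ge_0) H1) as Hz.
 specialize (Hind (fun j => if Nat.eqb j k then 1%Z else 0%Z)). 
 assert (1 = 0)%Z; [|lia]. replace 1%Z with ((fun j => if Nat.eqb j k then 1%Z else 0%Z) k) by (rewrite Nat.eqb_refl; auto).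
 apply Hind; auto. intros t Ht. rewrite (sumZ_delta m k); auto. rewrite Nat.eqb_refl.
 specialize (Hz t Ht). simpl in Hz. assert (IZR (b k t) = 0) by nra. apply eq_IZR in H2. lia.
 intros j Hj Hne. replace (Nat.eqb j k) with false by (symmetry; apply Nat.eqb_neq; auto). lia. Qed.

Lemma kappa_sq m : (1 <= m)%nat -> kappa m ^ 2 = / (INR m ^ 2 * 2 ^ (S m)).
Proof. intros Hm. unfold kappa. assert (0 < INR m) by (apply lt_0_INR; lia).
 assert (Rpower 2 (- (INR m + 1) / 2) ^ 2 = / 2 ^ (S m)).
 { simpl. rewrite Rmult_1_r, <- Rpower_plus. replace (- (INR m + 1) / 2 + - (INR m + 1) / 2) with (- INR (S m)) by (rewrite S_INR; field).
   rewrite Rpower_Ropp, Rpower_pow by lra. simpl. auto. }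
 rewrite Rpow_mult_distr, H0. rewrite pow_inv. rewrite Rinv_mult. auto. Qed.

Lemma pr_norm_le p m x : normZ m (pr p x) <= normZ (p + m) x.
Proof. pose proof (normZ_split p m x). rewrite <- (normZ_sq m (pr p x)) in H.
 pose proof (sumR_nonneg p (fun t => IZR (x t) ^ 2) ltac:(intros; apply pow2_ge_0)).
 apply sq_le_nonneg; try apply normZ_nonneg. lra. Qed.

Lemma norm_pos_of_nonzero p y : (exists j, (j < p)%nat /\ y j <> 0) -> 0 < normR p y.
Proof. intros (j & Hj & Hne). pose proof (normR_nonneg p y). destruct (Req_dec (normR p y) 0); [|lra].
 exfalso. assert (normR p y ^ 2 = 0) by (rewrite H0; ring). rewrite normR_sq in H1.
 pose proof (sumR_zero_nonneg p _ ltac:(intros; apply pow2_ge_0) H1 j Hj). simpl in H2. apply Hne. nra. Qed.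

Lemma pr_in_Lambda m p P beta Pb x Bi B :
  (2 <= m)%nat -> (p <= m)%nat -> 0 < beta ->
  (forall k j, (k < m)%nat -> (j < p)%nat -> -(1/2) <= IZR (Pb k j) - beta * P k j <= 1/2) ->
  in_R m p Pb x -> 0 <= Bi -> normZ (p + m) x <= Bi -> Bi < B -> phi_set m p P beta B ->
  Lambda m p P (pr p x).
Proof. intros Hm Hpm Hb HE HR HBi Hx HB [HB0 Hphi].
 destruct (classic (Lambda m p P (pr p x))) as [|HL]; auto. exfalso.
 assert (Hj : exists j, (j < p)%nat /\ vecmat m P (pr p x) j <> 0).
 { apply NNPP. intro Hn. apply HL. intros j Hj. apply NNPP. intro Hne. apply Hn. eauto. }
 set (u := pr p x) in *.
 assert (Hu : eps_set m p P B (normR p (vecmat m P u))).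
 { exists u. repeat split; auto. pose proof (pr_norm_le p m x). fold u in H. lra. }
 pose proof (eps_spec_holds m p P B) as Hs. destruct (eps m p P B) as [e|].
 2:{ apply (Hs _ Hu). }
 destruct Hs as [[u' (_ & Hu'2 & Hu'3)] Hmin]. specialize (Hmin _ Hu).
 assert (He : 0 < e) by (subst e; apply norm_pos_of_nonzero; auto).
 assert (Hm0 : 2 <= INR m) by (replace 2 with (INR 2) by (simpl; lra); apply le_INR; auto).
 assert (H1 : INR m * B <= beta * normR p (vecmat m P u)).
 { apply (Rmult_le_compat_r e) in Hphi; [|lra]. unfold Rdiv in Hphi. rewrite Rmult_assoc, Rinv_l, Rmult_1_r in Hphi by lra.
   eapply Rle_trans. exact Hphi. apply Rmult_le_compat_l; lra. }
 assert (H2 : (INR m * B) ^ 2 <= (beta * normR p (vecmat m P u)) ^ 2).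
 { assert (0 <= INR m * B) by nra. apply pow_incr; auto. }
 rewrite (Rpow_mult_distr beta), normR_sq, <- sumR_scal in H2.
 set (y := fun t => sumR m (fun k => IZR (u k) * (IZR (Pb k t) - beta * P k t))).
 assert (H3 : sumR p (fun t => beta ^ 2 * vecmat m P u t ^ 2) <= sumR p (fun t => 2 * IZR (x t) ^ 2 + 2 * y t ^ 2)).
 { apply sumR_le. intros t Ht. pose proof (real_decomp m P Pb beta u t). pose proof (R_first m p Pb x HR t Ht) as Hr. fold u in Hr. rewrite <- Hr in H.
   change (sumR m (fun k => IZR (u k) * (IZR (Pb k t) - beta * P k t))) with (y t) in H. replace (beta ^ 2 * vecmat m P u t ^ 2) with ((IZR (x t) - y t) ^ 2) by (rewrite H; ring).
   pose proof (pow2_ge_0 (IZR (x t) + y t)). simpl in *. nra. }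
 rewrite sumR_add, !sumR_scal in H3.
 pose proof (E_bound m p P Pb beta u Hpm HE). fold y in H.
 pose proof (normZ_split p m x). fold u in H0. rewrite <- (normZ_sq m u) in H0.
 pose proof (sumR_nonneg p (fun t => IZR (x t) ^ 2) ltac:(intros; apply pow2_ge_0)).
 rewrite <- (normZ_sq m u) in H.
 assert (normZ (p + m) x ^ 2 <= Bi ^ 2) by (apply pow_incr; split; auto; apply normZ_nonneg).
 pose proof (pow2_ge_0 (normZ m u)).
 rewrite sumR_scal in H2.
 change (sumR p (fun t => sumR m (fun k => IZR (u k) * (IZR (Pb k t) - beta * P k t)) ^ 2)) with (sumR p (fun t => y t ^ 2)) in H.
 set (M := INR m ^ 2) in *. set (X := sumR p (fun t => IZR (x t) ^ 2)) in *. set (Y := sumR p (fun t => y t ^ 2)) in *.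
 set (nu := normZ m u ^ 2) in *.
 assert (HM : 4 <= M) by (unfold M; nra).
 assert (nu <= Bi ^ 2 - X) by lra.
 assert (M * nu <= M * (Bi ^ 2 - X)) by (apply Rmult_le_compat_l; lra).
 assert (4 * X <= M * X) by (apply Rmult_le_compat_r; lra).
 assert (Hfin : (INR m * B) ^ 2 <= M / 2 * Bi ^ 2) by lra.
 rewrite Rpow_mult_distr in Hfin. fold M in Hfin.
 assert (Bi ^ 2 < B ^ 2) by (simpl; nra).
 assert (M * Bi ^ 2 < M * B ^ 2) by (apply Rmult_lt_compat_l; lra).
 pose proof (pow2_ge_0 Bi). assert (0 <= M * Bi ^ 2) by (apply Rmult_le_pos; lra). lra.
Qed.

Lemma kappa_const m : (2 <= m)%nat -> 3/2 * 2 ^ (m - 1) * (INR m ^ 2 / 4 + 1) * kappa m ^ 2 <= 3/16.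
Proof. intros Hm. rewrite kappa_sq by lia. destruct m as [|m']; [lia|]. replace (S m' - 1)%nat with m' by lia.
 assert (HM : 4 <= INR (S m') ^ 2). { assert (2 <= INR (S m')) by (replace 2 with (INR 2) by (simpl; lra); apply le_INR; auto). nra. }
 set (M := INR (S m') ^ 2) in *. pose proof (pow_lt 2 m' ltac:(lra)) as HT. set (T := 2 ^ m') in *.
 replace (2 ^ S (S m')) with (4 * T) by (unfold T; simpl; ring).
 replace (3 / 2 * T * (M / 4 + 1) * / (M * (4 * T))) with (3/32 + 3/8 * / M) by (field; lra).
 assert (/ M <= / 4) by (apply Rinv_le_contravar; lra). lra. Qed.

Lemma dot_normZ d x : dotR d (toR x) (toR x) = normZ d x ^ 2.
Proof. rewrite dotR_self, normZ_sq. reflexivity. Qed.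

Lemma KL m p P beta Pb b i (v : nat -> Z) :
  (2 <= m)%nat -> (p <= m)%nat ->
  (forall k j, (k < m)%nat -> (j < p)%nat -> -(1/2) <= IZR (Pb k j) - beta * P k j <= 1/2) ->
  is_Zbasis m (p + m) b (in_R m p Pb) ->
  (exists sigma : nat -> nat,
     (forall k, (k < m)%nat -> (sigma k < m)%nat) /\
     (forall j k, (j < m)%nat -> (k < m)%nat -> sigma j = sigma k -> j = k) /\
     LLL_reduced m (p + m) (fun k => toR (b (sigma k)))) ->
  (forall k, (S k < m)%nat -> normZ (p + m) (b k) <= normZ (p + m) (b (S k))) ->
  (i < m)%nat -> Lambda m p P v -> normZ m v <= kappa m * normZ (p + m) (b i) ->
  exists c, forall t, (t < m)%nat -> v t = sumZ i (fun k => c k * pr p (b k) t)%Z.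
Proof.
 intros Hm Hpm HE Hbas (sigma & Hs1 & Hs2 & HLLL) Hsort Hi HL Hv.
 set (w := lift m p Pb v). pose proof (lift_in_R m p Pb v) as HwR. fold w in HwR.
 pose proof Hbas as (Hin & Hind & Hspan). destruct (Hspan w HwR) as [dc Hd].
 destruct (classic (exists k0, (i <= k0 < m)%nat /\ dc k0 <> 0%Z)) as [(k0 & Hk0 & Hdk0)|Hno].
 2:{ exists dc. intros t Ht. rewrite <- (lift_pr m p Pb v t). fold w. unfold pr at 1. rewrite Hd by lia.
     apply sumZ_tail. lia. intros k Hk. assert (dc k = 0%Z) by (apply NNPP; intro; apply Hno; eauto). rewrite H; lia. }
 exfalso.
 pose proof (LA m (p + m) b sigma dc (toR w) k0 Hs1 Hs2 HLLL ltac:(lia) Hdk0) as HA.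
 rewrite !dot_normZ in HA.
 assert (HA' : normZ (p + m) (b k0) ^ 2 <= 3 / 2 * 2 ^ (m - 1) * normZ (p + m) w ^ 2).
 { apply HA. intros t Ht. unfold toR at 1. rewrite Hd by auto. rewrite IZR_sumZ. apply sumR_ext; intros. rewrite mult_IZR. reflexivity. }
 clear HA.
 assert (Hw2 : normZ (p + m) w ^ 2 <= (INR m ^ 2 / 4 + 1) * normZ m v ^ 2).
 { rewrite normZ_split. rewrite (sumR_ext m (fun t => IZR (pr p w t) ^ 2) (fun t => IZR (v t) ^ 2)) by (intros; unfold w; rewrite lift_pr; auto).
   rewrite <- (normZ_sq m v). 
   assert (sumR p (fun t => IZR (w t) ^ 2) = sumR p (fun t => (sumR m (fun k => IZR (v k) * (IZR (Pb k t) - beta * P k t))) ^ 2)).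
   { apply sumR_ext. intros t Ht. unfold w. rewrite lift_low by auto. rewrite (real_decomp m P Pb beta). rewrite (HL t Ht). f_equal. ring. }
   rewrite H. pose proof (E_bound m p P Pb beta v Hpm HE). rewrite <- (normZ_sq m v) in H0. lra. }
 set (Bb := normZ (p + m) (b i)) in *.
 assert (HBb : 0 < Bb) by (apply (basis_pos m (p+m) b _ Hbas); auto).
 assert (Hsi : Bb <= normZ (p + m) (b k0)) by (apply (sorted_chain (p+m) m b Hsort); lia).
 assert (Hsi2 : Bb ^ 2 <= normZ (p + m) (b k0) ^ 2) by (apply pow_incr; lra).
 assert (Hv2 : normZ m v ^ 2 <= kappa m ^ 2 * Bb ^ 2).
 { rewrite <- Rpow_mult_distr. apply pow_incr. split; auto. apply normZ_nonneg. }
 pose proof (kappa_const m Hm) as HK.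
 set (K2 := kappa m ^ 2) in *. set (M := INR m ^ 2) in *. set (T := 2 ^ (m - 1)) in *.
 assert (HT : 0 < T) by (apply pow_lt; lra).
 assert (HM : 0 <= M) by (unfold M; apply pow2_ge_0).
 assert (HK2 : 0 <= K2) by (unfold K2; apply pow2_ge_0).
 set (nv := normZ m v ^ 2) in *. set (nw := normZ (p + m) w ^ 2) in *.
 assert (3/2 * T * nw <= 3/2 * T * ((M/4+1) * nv)) by (apply Rmult_le_compat_l; lra).
 assert ((M/4+1) * nv <= (M/4+1) * (K2 * Bb^2)) by (apply Rmult_le_compat_l; lra).
 assert (3/2 * T * ((M/4+1) * nv) <= 3/2 * T * ((M/4+1) * (K2 * Bb^2))) by (apply Rmult_le_compat_l; lra).
 assert (3/2 * T * ((M/4+1) * (K2 * Bb^2)) = (3/2 * T * (M/4+1) * K2) * Bb^2) by ring.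
 assert ((3/2 * T * (M/4+1) * K2) * Bb^2 <= 3/16 * Bb^2) by (apply Rmult_le_compat_r; [apply pow2_ge_0|lra]).
 assert (0 < Bb ^ 2) by (apply pow_lt; lra).
 lra.
Qed.

Lemma sumZ_swap n k F : sumZ n (fun a => sumZ k (fun c => F a c)) = sumZ k (fun c => sumZ n (fun a => F a c)).
Proof. induction n; simpl. induction k; simpl; lia. rewrite IHn. rewrite <- sumZ_add. auto. Qed.

Lemma pr_indep m p Pb b i : is_Zbasis m (p + m) b (in_R m p Pb) -> (i <= m)%nat ->
  forall c : nat -> Z, (forall t, (t < m)%nat -> sumZ i (fun k => c k * pr p (b k) t)%Z = 0%Z) ->
  forall k, (k < i)%nat -> c k = 0%Z.
Proof. intros (Hin & Hind & _) Him c Hc k Hk.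
 set (c' := fun k => if (k <? i)%nat then c k else 0%Z).
 assert (Hc' : forall s, (s < m)%nat -> sumZ m (fun k => c' k * pr p (b k) s)%Z = 0%Z).
 { intros s Hs. rewrite (sumZ_tail m i) by (try lia; intros; unfold c'; replace (t <? i)%nat with false by (symmetry; apply Nat.ltb_ge; lia); lia).
   rewrite <- (Hc s Hs). apply sumZ_ext. intros. unfold c'. replace (t <? i)%nat with true by (symmetry; apply Nat.ltb_lt; lia). auto. }
 assert (c' k = 0%Z).
 { apply Hind; [|lia]. intros t Ht. destruct (Nat.lt_ge_cases t p).
   - rewrite (sumZ_ext m _ (fun k => sumZ m (fun s => c' k * pr p (b k) s * Pb s t)%Z)).
     2:{ intros. rewrite (R_first m p Pb (b t0) (Hin t0 H0) t H). rewrite <- sumZ_scal. apply sumZ_ext; intros; lia. }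
     rewrite sumZ_swap. apply sumZ_zero. intros s Hs.
     rewrite (sumZ_ext m _ (fun k => Pb s t * (c' k * pr p (b k) s))%Z) by (intros; lia).
     rewrite sumZ_scal, Hc' by auto. lia.
   - replace t with (p + (t - p))%nat by lia. apply Hc'. lia. }
 unfold c' in H. replace (k <? i)%nat with true in H by (symmetry; apply Nat.ltb_lt; lia). auto. Qed.

Lemma span_sum m i (bb : nat -> nat -> Z) (vv : nat -> nat -> Z) (a : nat -> Z) : forall n,
  (forall k, (k < n)%nat -> exists c, forall t, (t < m)%nat -> vv k t = sumZ i (fun j => c j * bb j t)%Z) ->
  exists c, forall t, (t < m)%nat -> sumZ n (fun k => a k * vv k t)%Z = sumZ i (fun j => c j * bb j t)%Z.
Proof. induction n; intros H.
 - exists (fun _ => 0%Z). intros. simpl. symmetry. apply sumZ_zero. intros; lia.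
 - destruct IHn as [c1 H1]. intros; apply H; lia. destruct (H n ltac:(lia)) as [c2 H2].
   exists (fun j => c1 j + a n * c2 j)%Z. intros t Ht. simpl. rewrite H1, H2 by auto.
   rewrite (sumZ_ext i (fun j => ((c1 j + a n * c2 j) * bb j t)%Z) (fun j => c1 j * bb j t + a n * (c2 j * bb j t))%Z) by (intros; ring).
   rewrite sumZ_add, sumZ_scal. lia. Qed.

Theorem proposition4p1
  (m p : nat) (P : nat -> nat -> R) (beta : R)
  (Pb : nat -> nat -> Z) (b : nat -> nat -> Z) (i : nat) :
  (2 <= m)%nat -> (1 <= p)%nat -> (p <= m)%nat ->
  0 < beta ->
  (forall k j, (k < m)%nat -> (j < p)%nat ->
     -(1/2) <= IZR (Pb k j) - beta * P k j <= 1/2) ->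
  is_Zbasis m (p + m) b (in_R m p Pb) ->
  (exists sigma : nat -> nat,
     (forall k, (k < m)%nat -> (sigma k < m)%nat) /\
     (forall j k, (j < m)%nat -> (k < m)%nat -> sigma j = sigma k -> j = k) /\
     LLL_reduced m (p + m) (fun k => toR (b (sigma k)))) ->
  (forall k, (S k < m)%nat -> normZ (p + m) (b k) <= normZ (p + m) (b (S k))) ->
  (i < m)%nat ->
  let B := fun l : nat => match l with O => 0 | S k => normZ (p + m) (b k) end in
  B i <= kappa m * B (S i) ->
  is_Zbasis i m (fun k => pr p (b k)) (Lambda m p P)
  \/ ~ generated_by_norm_le m (Lambda m p P) (kappa m * B (S i))
  \/ (match phi m p P beta with Some x => x <= B i | None => False end).
Proof.
 intros Hm Hp Hpm Hb HE Hbas Hsig Hsort Hi B HBi.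
 change (B (S i)) with (normZ (p + m) (b i)).
 assert (HB0 : 0 <= B i) by (destruct i; simpl; [lra | apply normZ_nonneg]).
 assert (HBj : forall j, (j < i)%nat -> normZ (p + m) (b j) <= B i).
 { intros j Hj. destruct i as [|i']; [lia|]. simpl. apply (sorted_chain (p+m) m b Hsort); lia. }
 destruct (classic (exists B', phi_set m p P beta B' /\ B i < B')) as [(B' & HB'1 & HB'2)|Hno].
 - destruct (classic (generated_by_norm_le m (Lambda m p P) (kappa m * normZ (p + m) (b i)))) as [Hg|Hg].
   2:{ right; left; auto. }
   left. pose proof Hbas as (Hin & _ & _). split; [|split].
   + intros k Hk. apply (pr_in_Lambda m p P beta Pb (b k) (B i) B'); auto. apply Hin; lia.
   + intros c Hc k Hk. apply (pr_indep m p Pb b i Hbas ltac:(lia) c); auto.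
   + intros x Hx. destruct (Hg x Hx) as (n & vv & a & Hv & Hxs).
     destruct (span_sum m i (fun k => pr p (b k)) vv a n) as [c Hc].
     { intros k Hk. destruct (Hv k Hk) as [HvL Hvn]. apply (KL m p P beta Pb b i (vv k)); auto. }
     exists c. intros t Ht. rewrite Hxs, Hc by auto. reflexivity.
 - right; right. pose proof (phi_spec_holds m p P beta) as Hs.
   assert (Hub : is_upper_bound (fun B0 => B0 = 0 \/ phi_set m p P beta B0) (B i)).
   { intros y [Hy|Hy]. lra. destruct (Rle_dec y (B i)); auto. exfalso. apply Hno. exists y. split; auto. lra. }
   destruct (phi m p P beta) as [x|].
   + destruct Hs as [_ Hs]. apply Hs; auto.
   + apply Hs. exists (B i). auto.
Qed.
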